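(* Let $n\ge1$ and let $\sigma\in S_n\le B_n$ have disjoint cycle decomposition (including fixed points as cycles of length $1$) \[ C_1=(i_{1,1}\,\dots\,i_{1,d_1}),\ \dots,\ C_j=(i_{j,1}\,\dots\,i_{j,d_j}),\qquad \sum_{r=1}^j d_r=n. \] Let $\tau\in C_{B_n}(\sigma)$. Then there exist a unique $\tau'\in C_{S_n}(\sigma)$ and unique $\lambda_1,\dots,\lambda_j\in\mathbb Z/2\mathbb Z$ such that \[ \tau=\tau' v,\qquad v=\sum_{r=1}^j\lambda_r\,(e_{i_{r,1}}+\dots+e_{i_{r,d_r}}), \] and moreover \[ \phi(\sigma,\tau)=\epsilon^{\sum_{r=1}^j\lambda_r(d_r-1)}. \]
   Context: $B_n=(\mathbb Z/2\mathbb Z)^n\rtimes S_n$ is the hyperoctahedral group, $S_n$ acting by permuting coordinates; $e_i$ is the $i$th unit vector of $(\mathbb Z/2\mathbb Z)^n$; $C_{B_n}(\sigma)$ and $C_{S_n}(\sigma)$ denote centralizers. $H_n$ is the set of pairs $(a,b)\in(\mathbb Z/2\mathbb Z)^n\times\mathbb Z/2\mathbb Z$ with group law $(a_1,b_1)(a_2,b_2)=(a_1+a_2,\ b_1+b_2+\sum_{1\le i<j\le n}a_{1,i}a_{2,j})$; put $x_i=(e_i,0)$ and $\epsilon=(0,1)$. $S_n$ acts on $H_n$ by automorphisms via $\sigma(x_i)=x_{\sigma(i)}$, $\sigma(\epsilon)=\epsilon$, and $G_n=H_n\rtimes S_n$ (with $\sigma h\sigma^{-1}=\sigma(h)$). The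 element $\epsilon$ is central in $G_n$ and $G_n/\{1,\epsilon\}\cong B_n$ (via $x_i\mapsto e_i$, $\sigma\mapsto\sigma$). For commuting $\sigma,\tau\in B_n$ with lifts $\widetilde\sigma,\widetilde\tau\in G_n$, define $\phi(\sigma,\tau)=\widetilde\sigma\widetilde\tau\widetilde\sigma^{-1}\widetilde\tau^{-1}\in\langle\epsilon\rangle$, which is independent of the choice of lifts. *)

(* Defs.v *)
From HB Require Import structures.
From mathcomp Require Import all_boot all_order all_algebra all_fingroup.
Set Implicit Arguments. Unset Strict Implicit. Unset Printing Implicit Defensive.
Import GRing.Theory.
Local Open Scope ring_scope.

Definition vec (n : nat) := {ffun 'I_n -> 'Z_2}.
Definition unitv n (i : 'I_n) : vec n := [ffun k => (k == i)%:R].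
Definition indic n (C : {set 'I_n}) : vec n := [ffun k => (k \in C)%:R].
Definition vscale n (c : 'Z_2) (a : vec n) : vec n := [ffun k => c * a k].
(* S_n acts on (Z/2)^n by permuting coordinates: s(e_i) = e_{s i} *)
Definition pact n (s : 'S_n) (a : vec n) : vec n := [ffun k => a ((s^-1)%g k)].

(* B_n = (Z/2)^n x| S_n ; the pair (a, s) stands for the product a * s.
   Permutations compose as functions: the product s1 s2 is s1 o s2,
   which in mathcomp's convention is (s2 * s1)%g. *)
Definition Bn (n : nat) := (vec n * 'S_n)%type.
Definition bmul n (x y : Bn n) : Bn n := (x.1 + pact x.2 y.1, (y.2 * x.2)%g).
Definition bperm n (s : 'S_n) : Bn n := (0, s).
Definition bvec n (a : vec n) : Bn n := (a, 1%g).

Definition Hn (n : nat) := (vec n * 'Z_2)%type.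
Definition hcross n (a1 a2 : vec n) : 'Z_2 :=
  \sum_(i < n) \sum_(j < n | (i < j)%N) a1 i * a2 j.
Definition hmul n (h1 h2 : Hn n) : Hn n :=
  (h1.1 + h2.1, h1.2 + h2.2 + hcross h1.1 h2.1).
Definition hone n : Hn n := (0, 0).
Definition hinv n (h : Hn n) : Hn n := (- h.1, - h.2 + hcross h.1 h.1).
Definition xgen n (i : 'I_n) : Hn n := (unitv i, 0).
Definition heps n (k : 'Z_2) : Hn n := (0, k).
(* the word  x_{s i1}^{a_i1} x_{s i2}^{a_i2} ... x_{s ik}^{a_ik}  (i1 < ... < ik) *)
Definition hword n (s : 'S_n) (a : vec n) : Hn n :=
  foldr (fun i acc => hmul (if a i == 0 then hone n else xgen (s i)) acc)
        (hone n) (enum 'I_n).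
(* action of S_n on H_n by the automorphisms x_i |-> x_{s i}, eps |-> eps:
   (a,b) = eps^(b - c) * x_{i1}^{a_i1} ... x_{ik}^{a_ik} where (a,c) = hword 1 a,
   and s maps it to eps^(b - c) * x_{s i1}^{a_i1} ... x_{s ik}^{a_ik}. *)
Definition hact n (s : 'S_n) (h : Hn n) : Hn n :=
  hmul (heps n (h.2 - (hword 1%g h.1).2)) (hword s h.1).

(* G_n = H_n x| S_n ; the pair (h, s) stands for h * s *)
Definition Gn (n : nat) := (Hn n * 'S_n)%type.
Definition gmul n (g1 g2 : Gn n) : Gn n :=
  (hmul g1.1 (hact g1.2 g2.1), (g2.2 * g1.2)%g).
Definition ginv n (g : Gn n) : Gn n := (hact (g.2^-1)%g (hinv g.1), (g.2^-1)%g).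
Definition gcomm n (g1 g2 : Gn n) : Gn n :=
  gmul (gmul (gmul g1 g2) (ginv g1)) (ginv g2).
Definition geps n (k : 'Z_2) : Gn n := (heps n k, 1%g).
Definition lift n (x : Bn n) : Gn n := ((x.1, 0), x.2).
Definition phi n (s t : Bn n) : Gn n := gcomm (lift s) (lift t).

(* Main.v *)
Require Import Defs.
From HB Require Import structures.
From mathcomp Require Import all_boot all_order all_algebra all_fingroup.
From mathcomp Require Import ring.
Import GRing.Theory.
Local Open Scope ring_scope.

Lemma z2_cases (x : 'Z_2) : x = 0 \/ x = 1.
Proof. by case: x => [[|[|]]] //= Hx; [left|right]; apply/val_inj. Qed.

Lemma z2_addxx (x : 'Z_2) : x + x = 0.
Proof. case: (z2_cases x) => [->|->]. by rewrite addr0. by apply/val_inj. Qed.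

Lemma z2_opp (x : 'Z_2) : - x = x.
Proof. by apply/eqP; rewrite eq_sym -subr_eq0 opprK z2_addxx. Qed.

Lemma z2_nat (k : nat) : (k%:R : 'Z_2) = (odd k)%:R.
Proof.
elim: k => // k IH; rewrite mulrS IH /=.
by case: (odd k) => //=; rewrite ?addr0 ?z2_addxx.
Qed.

Lemma z2_xor (b1 b2 : bool) : ((b1 (+) b2)%:R : 'Z_2) = b1%:R + b2%:R.
Proof. by case: b1; case: b2 => //=; rewrite ?addr0 ?add0r ?z2_addxx. Qed.

Lemma z2_and (b1 b2 : bool) : ((b1 && b2)%:R : 'Z_2) = b1%:R * b2%:R.
Proof. by case: b1; case: b2; rewrite ?mulr0 ?mulr1 ?mul0r. Qed.

Lemma z2_mulxx (x : 'Z_2) : x * x = x.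
Proof. by case: (z2_cases x) => [->|->]; rewrite ?mulr0 ?mulr1. Qed.
Lemma sum_enum n (F : 'I_n -> 'Z_2) : \sum_(j <- enum 'I_n) F j = \sum_(j < n) F j.
Proof. by rewrite enumT. Qed.
Lemma sorted_enum_ord n : sorted (fun i j : 'I_n => (i < j)%N) (enum 'I_n).
Proof. by have := iota_ltn_sorted 0 n; rewrite -val_enum_ord sorted_map. Qed.
Lemma sum_pred1 n (x : 'I_n) (F : 'I_n -> 'Z_2) : \sum_p (p == x)%:R * F p = F x.
Proof.
rewrite (bigD1 x) //= eqxx mul1r big1 ?addr0 // => p /negbTE ->; by rewrite mul0r.
Qed.
Lemma hcross0l n (v : vec n) : hcross 0 v = 0.
Proof. by rewrite /hcross big1 // => i _; rewrite big1 // => j _; rewrite ffunE mul0r. Qed.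
Lemma hcross0r n (v : vec n) : hcross v 0 = 0.
Proof. by rewrite /hcross big1 // => i _; rewrite big1 // => j _; rewrite ffunE mulr0. Qed.

Lemma gen_eq n (s : 'S_n) (a : vec n) i :
  (if a i == 0 then hone n else xgen (s i)) = ([ffun k => a i * (k == s i)%:R], 0).
Proof.
case: ifP => [/eqP -> | H].
  by congr pair; apply/ffunP => k; rewrite !ffunE mul0r.
case: (z2_cases (a i)) => Hai; first by rewrite Hai eqxx in H.
by rewrite Hai; congr pair; apply/ffunP => k; rewrite !ffunE mul1r.
Qed.

Lemma hword_list n (s : 'S_n) (a : vec n) (l : seq 'I_n) :
  sorted (fun i j : 'I_n => (i < j)%N) l ->
  foldr (fun i acc => hmul (if a i == 0 then hone n else xgen (s i)) acc) (hone n) l =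
  ([ffun k => \sum_(j <- l) a j * (k == s j)%:R],
   \sum_(i <- l) \sum_(j <- l) ((i < j)%N && (s i < s j)%N)%:R * (a i * a j)).
Proof.
elim: l => [_|i l IH Hs] /=.
  by rewrite !big_nil; congr pair; apply/ffunP => k; rewrite !ffunE big_nil.
have Hl : sorted (fun i j : 'I_n => (i < j)%N) l by apply: path_sorted Hs.
have Hall : all (fun j : 'I_n => (i < j)%N) l.
  by apply: order_path_min Hs => x y z; apply: ltn_trans.
rewrite IH // gen_eq /hmul /=; congr pair.
  by apply/ffunP => k; rewrite !ffunE big_cons.
rewrite add0r.
set f := fun i' j : 'I_n => ((i' < j)%N && (s i' < s j)%N)%:R * (a i' * a j).
have E1 : \sum_(i0 <- i :: l) \sum_(j <- i :: l) f i0 j =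
     \sum_(j <- l) f i j + \sum_(i0 <- l) \sum_(j <- l) f i0 j.
  rewrite big_cons big_cons {1}/f ltnn /= mul0r add0r; congr (_ + _).
  rewrite big_seq [RHS]big_seq; apply: eq_bigr => i' Hi'; rewrite big_cons.
  have H : (i < i')%N by move/allP: Hall => /(_ i' Hi').
  by rewrite {1}/f ltnNge (ltnW H) /= mul0r add0r.
rewrite E1 addrC; congr (_ + _).
rewrite /hcross (bigD1 (s i)) //=.
rewrite [X in _ + X = _]big1 ?addr0; last first.
  move=> p /negbTE Hp; apply: big1 => q _; by rewrite !ffunE Hp mulr0 mul0r.
under eq_bigr do rewrite !ffunE eqxx mulr1.
under eq_bigr do rewrite mulr_sumr.
rewrite exchange_big /=.
rewrite [RHS]big_seq_cond [LHS]big_seq_cond; apply: eq_bigr => j /andP[Hj _].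
rewrite /f; move/allP: Hall => /(_ j Hj) -> /=.
under eq_bigr do rewrite mulrA mulrAC.
rewrite big_mkcond (bigD1 (s j)) //= eqxx big1 ?addr0; last first.
  by move=> q /negbTE ->; case: ifP => _; rewrite ?mulr0 ?mul0r.
by case: ifP => _; rewrite ?mulr1 ?mul1r ?mul0r.
Qed.

Definition A {n} (w : 'S_n) (c : vec n) : 'Z_2 :=
  \sum_(i < n) \sum_(j < n) ((i < j)%N && (w i < w j)%N)%:R * (c i * c j).

Lemma hword_eq n (s : 'S_n) (a : vec n) : hword s a = (pact s a, A s a).
Proof.
rewrite /hword hword_list ?sorted_enum_ord //; congr pair.
  apply/ffunP => k; rewrite !ffunE sum_enum.
  rewrite (bigD1 (s^-1 k)%g) //= permKV eqxx mulr1 big1 ?addr0 // => j Hj.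
  have -> : (k == s j) = false.
    apply/negbTE; apply: contra Hj => /eqP ->; by rewrite permK.
  by rewrite mulr0.
rewrite sum_enum /A; apply: eq_bigr => i _; by rewrite sum_enum.
Qed.

Lemma hact_eq n (s : 'S_n) (h : Hn n) : hact s h = (pact s h.1, h.2 - A 1 h.1 + A s h.1).
Proof.
rewrite /hact !hword_eq /hmul /= add0r hcross0l addr0; done.
Qed.

Lemma vopp n (v : vec n) : - v = v.
Proof. by apply/ffunP => k; rewrite ffunE z2_opp. Qed.
Lemma pact0 n (w : 'S_n) : pact w 0 = 0.
Proof. by apply/ffunP => k; rewrite !ffunE. Qed.
Lemma A0 n (w : 'S_n) : A w 0 = 0.
Proof. by apply: big1 => i _; apply: big1 => j _; rewrite ffunE mul0r mulr0. Qed.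
Lemma pactK n (w : 'S_n) (v : vec n) : pact w (pact w^-1 v) = v.
Proof. by apply/ffunP => k; rewrite !ffunE invgK permKV. Qed.
Lemma pactKV n (w : 'S_n) (v : vec n) : pact w^-1 (pact w v) = v.
Proof. by apply/ffunP => k; rewrite !ffunE invgK permK. Qed.

Lemma phi_eq n (s u : 'S_n) (a : vec n) : pact s a = a -> (u * s = s * u)%g ->
  phi (bperm s) (a,u) = geps n (A s a + A 1 (pact u^-1 a) + (A u^-1 a + A u (pact u^-1 a))).
Proof.
move=> Ha Hus.
rewrite /phi /gcomm /gmul /ginv /lift /bperm /geps /heps /=.
rewrite !hact_eq /= /hinv /= !vopp !pact0 !A0 /=.
rewrite Hus mulgA mulVg mul1g mulVg Ha.
rewrite /hmul /= pactK !hcross0l !hcross0r.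
congr (_, _, _).
  by rewrite add0r addr0; apply/ffunP => k; rewrite !ffunE z2_addxx.
rewrite !z2_opp.
rewrite !add0r !addr0.
set X := hcross a a.
apply/eqP; rewrite -subr_eq0; apply/eqP.
have two : (2 : 'Z_2) = 0 by apply/val_inj.
transitivity (2 * (X + A 1 a)); first ring.
by rewrite two mul0r.
Qed.

Lemma z2_by2 (x y z : 'Z_2) : x - y = 2 * z -> x = y.
Proof.
move=> H; apply/eqP; rewrite -subr_eq0 H.
by have -> : (2 : 'Z_2) = 0 by apply/val_inj.
Qed.

Lemma sumR n (p : 'S_n) (F : 'I_n -> 'I_n -> 'Z_2) :
  \sum_i \sum_j F (p i) (p j) = \sum_i \sum_j F i j.
Proof.
rewrite [RHS](reindex_inj (@perm_inj _ p)); apply: eq_bigr => i _.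
by rewrite [RHS](reindex_inj (@perm_inj _ p)).
Qed.

Lemma sumZ n (h : 'I_n -> 'I_n -> 'Z_2) :
  (forall i j, h i j = h j i) -> (forall i, h i i = 0) -> \sum_i \sum_j h i j = 0.
Proof.
move=> hS h0.
have E : forall i j, h i j = (i < j)%N%:R * h i j + (j < i)%N%:R * h i j.
  move=> i j; case: (ltngtP i j) => H; rewrite ?mul1r ?mul0r ?addr0 ?add0r //.
  by have -> : i = j by apply/val_inj. 
under eq_bigr do under eq_bigr do rewrite E.
under eq_bigr do rewrite big_split.
rewrite big_split /= [X in _ + X]exchange_big /=.
have -> : \sum_(j < n) \sum_(i < n) (j < i)%N%:R * h i j = \sum_(i < n) \sum_(j < n) (i < j)%N%:R * h i j.
  by apply: eq_bigr => i _; apply: eq_bigr => j _; rewrite hS.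
exact: z2_addxx.
Qed.

Lemma flip n (i j : 'I_n) : i != j -> ((j < i)%N%:R : 'Z_2) = 1 + (i < j)%N%:R.
Proof.
move=> H; case: (ltngtP i j) => H'.
- by rewrite z2_addxx.
- by rewrite addr0.
- by rewrite (val_inj H') eqxx in H.
Qed.

Lemma sumSym n (w : 'S_n) (g : 'I_n -> 'I_n -> 'Z_2) :
  (forall i j, g i j = g j i) ->
  \sum_(i < n) \sum_(j < n) (w i < w j)%N%:R * g i j =
  \sum_(i < n) \sum_(j < n) (i < j)%N%:R * g i j.
Proof.
move=> gS; apply/eqP; rewrite -subr_eq0 z2_opp -big_split /=; apply/eqP.
under eq_bigr do rewrite -big_split /=.
apply: sumZ => [i j|i]; last by rewrite !ltnn mul0r add0r.
have [->|Hij] := eqVneq i j; first done.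
have Hw : w i != w j by rewrite (inj_eq (@perm_inj _ w)).
rewrite (flip _ _ _ Hij) (flip _ _ _ Hw) (gS j i); apply: (@z2_by2 _ _ (- g i j)); ring.
Qed.

Definition N {n} (w : 'S_n) (c : vec n) : 'Z_2 :=
  \sum_(i < n) \sum_(j < n) ((i < j)%N && (w j < w i)%N)%:R * (c i * c j).

Lemma A1E n (c : vec n) : A 1 c = \sum_(i < n) \sum_(j < n) (i < j)%N%:R * (c i * c j).
Proof. by apply: eq_bigr => i _; apply: eq_bigr => j _; rewrite !perm1 andbb. Qed.

Lemma A1_pact n (u : 'S_n) (c : vec n) : A 1 (pact u^-1 c) = A 1 c.
Proof.
rewrite !A1E.
pose F := fun k l : 'I_n => ((u^-1)%g k < (u^-1)%g l)%N%:R * (c k * c l).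
transitivity (\sum_(i < n) \sum_(j < n) F (u i) (u j)).
  by apply: eq_bigr => i _; apply: eq_bigr => j _; rewrite /F !permK !ffunE !invgK.
rewrite sumR /F sumSym // => i j; exact: mulrC.
Qed.

Lemma Au_pact n (u : 'S_n) (c : vec n) : A u (pact u^-1 c) = A u^-1 c.
Proof.
pose F := fun k l : 'I_n => (((u^-1)%g k < (u^-1)%g l)%N && (k < l)%N)%:R * (c k * c l).
transitivity (\sum_(i < n) \sum_(j < n) F (u i) (u j)).
  by apply: eq_bigr => i _; apply: eq_bigr => j _; rewrite /F !permK !ffunE !invgK.
by rewrite sumR /F /A; apply: eq_bigr => i _; apply: eq_bigr => j _; rewrite andbC.
Qed.

Lemma AN n (s : 'S_n) (c : vec n) : A s c + A 1 c = N s c.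
Proof.
rewrite A1E /A -big_split; apply: eq_bigr => i _; rewrite -big_split; apply: eq_bigr => j _ /=.
rewrite -mulrDl; congr (_ * _).
case: (ltnP i j) => H /=; last by rewrite addr0.
have Hij : i != j by rewrite -(inj_eq val_inj) /= neq_ltn H.
have Hs : s i != s j by rewrite (inj_eq (@perm_inj _ s)).
by rewrite (flip _ _ _ Hs) addrC.
Qed.

Lemma phiN n (s u : 'S_n) (a : vec n) : pact s a = a -> (u * s = s * u)%g ->
  phi (bperm s) (a,u) = geps n (N s a).
Proof.
move=> Ha Hus; rewrite phi_eq // A1_pact Au_pact z2_addxx addr0; by rewrite AN.
Qed.

Lemma Ncocycle n (t p : 'S_n) (c : vec n) : N (t * p)%g c = N t c + N p (pact t c).
Proof.
pose c' := pact t c.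
pose G := fun k l : 'I_n => ((k < l)%N%:R + (p k < p l)%N%:R) * (c' k * c' l).
have GS : forall k l, G k l = G l k.
  move=> k l; have [->|Hkl] := eqVneq k l; first done.
  have Hp : p k != p l by rewrite (inj_eq (@perm_inj _ p)).
  rewrite /G (flip _ _ _ Hkl) (flip _ _ _ Hp) [c' l * _]mulrC.
  apply: (@z2_by2 _ _ (- (c' k * c' l))); ring.
have E1 : N (t * p)%g c = N t c + \sum_(i < n) \sum_(j < n) (i < j)%N%:R * G (t i) (t j).
  rewrite /N -big_split; apply: eq_bigr => i _; rewrite -big_split; apply: eq_bigr => j _ /=.
  rewrite /G /c' !ffunE !permK !permM.
  case: (ltnP i j) => H /=; last by rewrite !mul0r add0r.
  have Hij : i != j by rewrite -(inj_eq val_inj) /= neq_ltn H.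
  have Ht : t i != t j by rewrite (inj_eq (@perm_inj _ t)).
  have Hp : p (t i) != p (t j) by rewrite (inj_eq (@perm_inj _ p)).
  rewrite (flip _ _ _ Ht) (flip _ _ _ Hp).
  apply: (@z2_by2 _ _ (- (((t i < t j)%N%:R) * (c i * c j)))); ring.
rewrite E1; congr (_ + _).
pose F := fun k l : 'I_n => ((t^-1)%g k < (t^-1)%g l)%N%:R * G k l.
transitivity (\sum_(i < n) \sum_(j < n) F (t i) (t j)).
  by apply: eq_bigr => i _; apply: eq_bigr => j _; rewrite /F !permK.
rewrite sumR /F sumSym //; apply: eq_bigr => k _; apply: eq_bigr => l _.
rewrite /G mulrA; congr (_ * _).
case: (ltnP k l) => H /=; last by rewrite mul0r.
have Hkl : k != l by rewrite -(inj_eq val_inj) /= neq_ltn H.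
have Hp : p k != p l by rewrite (inj_eq (@perm_inj _ p)).
by rewrite mul1r (flip _ _ _ Hp).
Qed.

Lemma sum3 n (x y : 'I_n) (F : 'I_n -> 'Z_2) : x != y ->
  \sum_l F l = F x + F y + \sum_(l | (l != x) && (l != y)) F l.
Proof.
move=> Hxy; rewrite (bigD1 x) // (bigD1 y) /=; last by rewrite eq_sym.
by rewrite addrA.
Qed.

Lemma N1 n (c : vec n) : N 1 c = 0.
Proof.
by apply: big1 => i _; apply: big1 => j _; rewrite !perm1; case: ltngtP; rewrite ?mul0r.
Qed.

Lemma Ntperm n (x y : 'I_n) (c : vec n) : x != y -> c x = 1 -> c y = 1 ->
  N (tperm x y) c = 1.
Proof.
move=> Hxy Hx Hy.
set t := tperm x y.
pose f := fun i j : 'I_n => ((i < j)%N && (t j < t i)%N)%:R * (c i * c j).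
have tx : t x = y by rewrite /t tpermL.
have ty : t y = x by rewrite /t tpermR.
have tz : forall z, z != x -> z != y -> t z = z.
  by move=> z Hzx Hzy; rewrite /t tpermD // eq_sym.
have fzw : forall z w, z != x -> z != y -> w != x -> w != y -> f z w = 0.
  move=> z w ? ? ? ?; rewrite /f (tz z) // (tz w) //; case: ltngtP => //= _; by rewrite mul0r.
have fzx : forall z, z != x -> z != y -> f z x = f y z.
  by move=> z ? ?; rewrite /f (tz z) // tx ty Hx Hy mulr1 mul1r andbC.
have fzy : forall z, z != x -> z != y -> f z y = f x z.
  by move=> z ? ?; rewrite /f (tz z) // tx ty Hx Hy mulr1 mul1r andbC.
have fxx : f x x = 0 by rewrite /f ltnn mul0r.
have fyy : f y y = 0 by rewrite /f ltnn mul0r.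
rewrite /N -/t -/f.
under eq_bigr do rewrite (sum3 _ _ _ (f _) Hxy).
rewrite !big_split /= (sum3 _ _ _ (fun i => f i x) Hxy) (sum3 _ _ _ (fun i => f i y) Hxy).
rewrite (sum3 _ _ _ (fun i => \sum_(l | (l != x) && (l != y)) f i l) Hxy) /=.
have Z : \sum_(l | (l != x) && (l != y)) \sum_(l0 | (l0 != x) && (l0 != y)) f l l0 = 0.
  by apply: big1 => z /andP[? ?]; apply: big1 => w /andP[? ?]; apply: fzw.
rewrite Z.
rewrite fxx fyy addr0.
have E : \sum_(i | (i != x) && (i != y)) f i x + \sum_(i | (i != x) && (i != y)) f i y
   + \sum_(l | (l != x) && (l != y)) f x l + \sum_(l | (l != x) && (l != y)) f y l = 0.
  rewrite -!big_split /=; apply: big1 => z /andP[? ?].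
  rewrite fzx // fzy //; apply: (@z2_by2 _ _ (f y z + f x z)); ring.
have E2 : f y x + f x y = 1.
  rewrite /f tx ty Hx Hy !andbb !mulr1.
  rewrite (flip _ _ _ Hxy); apply: (@z2_by2 _ _ (x < y)%N%:R); ring.
rewrite -E2.
transitivity ((\sum_(i | (i != x) && (i != y)) f i x + \sum_(i | (i != x) && (i != y)) f i y
   + \sum_(l | (l != x) && (l != y)) f x l + \sum_(l | (l != x) && (l != y)) f y l)
   + (f y x + f x y)); first ring.
by rewrite E add0r.
Qed.

Lemma pact_indic_tperm n (S : {set 'I_n}) x y : x \in S -> y \in S ->
  pact (tperm x y) (indic S) = indic S.
Proof.
move=> Hx Hy; apply/ffunP => k; rewrite !ffunE tpermV.
by case: tpermP => [->|->|]; rewrite ?Hx ?Hy.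
Qed.

Lemma Lsupp n (S : {set 'I_n}) (p : 'S_n) : (forall z, z \notin S -> p z = z) ->
  N p (indic S) = (odd_perm p)%:R.
Proof.
have [m] := ubnP #|[pred z | p z != z]|; elim: m p => // m IH p /ltnSE le_s_n Hsupp.
case: (pickP (fun z => p z != z)) => [x s_x | s_id]; last first.
  have -> : p = 1%g by apply/permP => z; apply/eqP; rewrite perm1; apply/idPn; rewrite s_id.
  by rewrite N1 odd_perm1.
set w := (p^-1)%g x.
have Hwx : w != x.
  apply: contra s_x => /eqP Hw; by rewrite -{1}Hw /w permKV.
have HxS : x \in S by apply: contraR s_x => /Hsupp ->.
have HwS : w \in S.
  apply: contraR Hwx => /Hsupp Hw; by rewrite -{1}Hw /w permKV.
pose p' := (tperm x w * p)%g.
have Ep : p = (tperm x w * p')%g by rewrite /p' mulgA tperm2 mul1g.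
have Hsupp' : forall z, z \notin S -> p' z = z.
  move=> z Hz; rewrite /p' permM tpermD ?Hsupp //.
    by apply: contraNneq Hz => <-.
  by apply: contraNneq Hz => <-.
have Hcard : (#|[pred z | p' z != z]| < m)%N.
  rewrite (cardD1 x) !inE s_x in le_s_n; apply: leq_ltn_trans le_s_n.
  apply: subset_leq_card; apply/subsetP=> y.
  rewrite !inE /p' permM permE /= -(canF_eq (permK _)).
  have [-> | ne_yx] := eqVneq y x; first by rewrite permKV eqxx.
  by case: (p y =P x) => // -> _; rewrite eq_sym.
have IH' := IH p' Hcard Hsupp'.
rewrite Ep Ncocycle pact_indic_tperm // Ntperm // ?ffunE ?HxS ?HwS //.
rewrite IH' odd_mul_tperm eq_sym Hwx z2_xor.
  by congr (_ + _); apply/val_inj.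
by apply/eqP => H; move: Hwx; rewrite H eqxx.
Qed.

Lemma sum_porbits_card n (p : 'S_n) : (\sum_(C in porbits p) #|C|)%N = n.
Proof.
transitivity #|'I_n|; last exact: card_ord.
rewrite -sum1_card (partition_big_imset (porbit p)) /=.
apply: eq_bigr => C /imsetP[y _ ->].
rewrite (eq_bigl (fun x => x \in porbit p y)) ?sum1_card // => x.
by rewrite -eq_porbit_mem.
Qed.

Lemma restr_ex n (s : 'S_n) (S : {set 'I_n}) : (forall z, (s z \in S) = (z \in S)) ->
  {r : 'S_n | forall z, r z = if z \in S then s z else z}.
Proof.
move=> HS.
have inj : injective (fun z => if z \in S then s z else z).
  move=> z1 z2 /=; case: ifP => H1; case: ifP => H2.
  - exact: perm_inj.
  - by move=> E; move: H2; rewrite -E HS H1.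
  - by move=> E; move: H1; rewrite E HS H2.
  - done.
by exists (perm inj) => z; rewrite permE.
Qed.

Lemma restr_porbit n (s r : 'S_n) (S : {set 'I_n}) : (forall z, (s z \in S) = (z \in S)) ->
  (forall z, r z = if z \in S then s z else z) ->
  forall x, porbit r x = if x \in S then porbit s x else [set x].
Proof.
move=> HS Hr x; case: ifP => Hx.
  have E : forall i, (r ^+ i)%g x = (s ^+ i)%g x /\ (s ^+ i)%g x \in S.
    elim=> [|i [IH1 IH2]]; first by rewrite !expg0 !perm1.
    by rewrite !expgSr !permM IH1 Hr IH2 HS.
  apply/setP => y; apply/porbitP/porbitP => -[i ->]; exists i; by case: (E i).
have E : forall i, (r ^+ i)%g x = x.
  by elim=> [|i IH]; rewrite ?expg0 ?perm1 // expgSr permM IH Hr Hx.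
apply/setP => y; rewrite inE; apply/porbitP/eqP => [[i ->]|->]; first exact: E.
by exists 0%N; rewrite expg0 perm1.
Qed.

Theorem corollary2p4 (n : nat) (Hn1 : (0 < n)%N) (s : 'S_n) (t : Bn n) :
  bmul (bperm s) t = bmul t (bperm s) ->
  exists (t' : 'S_n) (lam : {set 'I_n} -> 'Z_2),
    [/\ t' \in 'C[s]%g,
        t = bmul (bperm t') (bvec (\sum_(C in porbits s) vscale (lam C) (indic C))),
        (forall (t2 : 'S_n) (lam2 : {set 'I_n} -> 'Z_2),
            t2 \in 'C[s]%g ->
            t = bmul (bperm t2) (bvec (\sum_(C in porbits s) vscale (lam2 C) (indic C))) ->
            t2 = t' /\ {in porbits s, lam2 =1 lam}) &
        phi (bperm s) t = geps n (\sum_(C in porbits s) lam C * (#|C| - 1)%:R)].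
Proof.
case: t => a u H.
have [Ha Hus] : pact s a = a /\ (u * s = s * u)%g.
  by move: H; rewrite /bmul /bperm /= add0r pact0 addr0 => -[-> ->].
have Hsu : forall z, s (u z) = u (s z) by move=> z; rewrite -!permM Hus.
have Has : forall z, a (s z) = a z by move=> z; rewrite -{1}Ha ffunE permK.
set v := pact u^-1 a.
have vE : forall z, v z = a (u z) by move=> z; rewrite ffunE invgK.
have Hvs : forall z, v (s z) = v z by move=> z; rewrite !vE -Hsu Has.
have vorb : forall x y, y \in porbit s x -> v y = v x.
  move=> x y /porbitP[i ->]; elim: i => [|i IH]; first by rewrite expg0 perm1.
  by rewrite expgSr permM Hvs IH.
pose lam := fun C : {set 'I_n} => if [pick x in C] is Some x then v x else 0.
have lamE : forall x, lam (porbit s x) = v x.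
  move=> x; rewrite /lam; case: pickP => [y Hy | H0]; first exact: vorb.
  by move: (H0 x); rewrite porbit_id.
have sumE : forall (l : {set 'I_n} -> 'Z_2) k,
    (\sum_(C in porbits s) vscale (l C) (indic C)) k = l (porbit s k).
  move=> l k; rewrite sum_ffunE (bigD1 (porbit s k)) /=; last by apply: imset_f.
  rewrite !ffunE porbit_id mulr1 big1 ?addr0 // => C /andP[/imsetP[y _ ->] Hne].
  rewrite !ffunE; have -> : (k \in porbit s y) = false.
    by apply/negbTE; apply: contra Hne => Hk; rewrite eq_porbit_mem porbit_sym.
  by rewrite mulr0.
have vsum : \sum_(C in porbits s) vscale (lam C) (indic C) = v.
  by apply/ffunP => k; rewrite sumE lamE.
exists u, lam; split.
- by apply/cent1P.
- by rewrite vsum /bmul /bperm /bvec /= add0r mul1g pactK.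
- move=> t2 l2 Ht2; rewrite /bmul /bperm /bvec /= add0r mul1g => -[Ea Eu].
  subst t2; split => // C /imsetP[x _ ->].
  have V2 : \sum_(C in porbits s) vscale (l2 C) (indic C) = v by rewrite /v Ea pactKV.
  by rewrite -sumE V2 lamE.
rewrite phiN //; congr (geps n _).
set S := [set i | a i != 0].
have aS : a = indic S.
  apply/ffunP => k; rewrite !ffunE inE.
  by case: (z2_cases (a k)) => ->.
have HS : forall z, (s z \in S) = (z \in S) by move=> z; rewrite !inE Has.
have [r Hr] := restr_ex _ _ _ HS.
have Nr : N s a = N r a.
  rewrite aS; apply: eq_bigr => i _; apply: eq_bigr => j _; rewrite !ffunE.
  case: (boolP (i \in S)) => Hi; case: (boolP (j \in S)) => Hj;
    rewrite ?Hr ?Hi ?Hj /= ?mul0r ?mulr0 //.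
rewrite Nr aS (Lsupp _ S r); last by move=> z Hz; rewrite Hr (negbTE Hz).
set S' := [set i | v i != 0].
have HS' : forall z, (s z \in S') = (z \in S') by move=> z; rewrite !inE Hvs.
have [r' Hr'] := restr_ex _ _ _ HS'.
have Er' : r' = (r ^ (u^-1))%g.
  apply/permP => z; have := permJ r (u^-1)%g (u z); rewrite permK => ->.
  rewrite Hr Hr' !inE vE; case: ifP => _; by rewrite ?Hsu permK.
rewrite -(odd_permJ r (u^-1)%g) -Er'.
have Por := restr_porbit _ _ _ _ HS' Hr'.
pose G := fun C : {set 'I_n} => ((#|C| - 1)%N%:R : 'Z_2).
have E1 : \sum_(C in porbits s) lam C * (#|C| - 1)%:R =
          \sum_(C in porbits s | (lam C != 0) && (#|C| != 1%N)) G C.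
  rewrite (bigID (fun C => (lam C != 0) && (#|C| != 1%N))) /=.
  rewrite [X in _ + X]big1 ?addr0; last first.
    move=> C /andP[_]; rewrite negb_and !negbK => /orP[/eqP -> | /eqP ->]; by rewrite ?mul0r ?mulr0.
  apply: eq_bigr => C /andP[_ /andP[Hl _]].
  by case: (z2_cases (lam C)) Hl => -> //; rewrite mul1r.
have E2 : (odd_perm r')%:R = \sum_(C in porbits r') G C.
  rewrite /G.
  have -> : \sum_(C in porbits r') ((#|C| - 1)%N%:R : 'Z_2) =
            \sum_(C in porbits r') (#|C|%:R - 1).
    apply: eq_bigr => C /imsetP[x _ ->]; rewrite natrB //.
    by rewrite lt0n card_porbit_neq0.
  rewrite sumrB -natr_sum sum_porbits_card sumr_const /odd_perm card_ord.
  by rewrite -mulr_natl mulr1 (z2_nat n) (z2_nat #|porbits r'|) z2_opp z2_xor.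
have E3 : \sum_(C in porbits r') G C = \sum_(C in porbits r' | #|C| != 1%N) G C.
  rewrite [LHS](bigID (fun C : {set 'I_n} => #|C| != 1%N)) /= [X in _ + X]big1 ?addr0 //.
  by move=> C /andP[_]; rewrite negbK /G => /eqP ->.
rewrite E1 E2 E3; apply: eq_bigl => C.
apply/idP/idP.
  case/andP => /imsetP[x _ ->]; rewrite Por; case: ifP => Hx Hc; last by rewrite cards1 in Hc.
  rewrite imset_f // lamE Hc andbT /=; by rewrite inE in Hx.
case/andP => /imsetP[x _ ->] /andP[Hl Hc]; rewrite lamE in Hl.
have Hx : x \in S' by rewrite inE.
have := Por x; rewrite Hx => <-.
by rewrite imset_f //= (Por x) Hx.
Qed.
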